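(* In the setting described in the context, let $\rho:\mathbb{R}^n\to[0,\infty)$ be continuous and $\phi:[0,\infty)\to[0,\infty)$ be continuous and nondecreasing, and suppose that (in addition to the bounds on $\alpha$) $\alpha(x)=\phi(\rho(x))$ for all $x\in\mathbb{R}^n$. Assume further that there exists a nondecreasing function $\Gamma:[0,\infty)\to[0,\infty)$ such that $\inf_{u\in U}\rho(f(x,u))=\Gamma(\rho(x))$ for all $x\in\mathbb{R}^n$. Then $\inf_{u\in U}\mathcal{V}(\{f(x,u)\})<\mathcal{V}(\{x\})$ and $\inf_{u\in U}\mathcal{W}(\{f(x,u)\})<\mathcal{W}(\{x\})$ for all $x\in\mathcal{D}_{\mathcal{A}}\setminus\mathcal{A}$.
   Context: Let $\|\cdot\|$ be a norm on $\mathbb{R}^n$ and $\mathrm{dist}(x,\Omega):=\inf_{y\in\Omega}\|x-y\|$. Let $\mathcal{K}(\mathbb{R}^n)$ denote the nonempty compact subsets of $\mathbb{R}^n$. Consider $x_{k+1}=f(x_k,u_k)$ with $f:\mathbb{R}^n\times\mathbb{R}^m\to\mathbb{R}^n$ continuous and inputs $u_k\in U$, $U\subset\mathbb{R}^m$ nonempty compact. For $x\in\mathbb{R}^n$ and $\pi:\mathbb{Z}_+\to U$, $\varphi_x^\pi(0)=x$, $\varphi_x^\pi(k+1)=f(\varphi_x^\pi(k),\pi(k))$; $\mathcal{R}(X,k):=\{\varphi_x^\pi(k):x\in X,\pi\in U^{\mathbb{Z}_+}\}$. Let $\mathcal{A}\in\mathcal{K}(\mathbb{R}^n)$ be controlled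 invariant. Assume local $\ell_p$-stabilizability: there exist $r>0$, $M\ge1$, $p>0$, $\lambda:[0,r]\times\mathbb{Z}_+\to\mathbb{R}_+$ such that (1) for each $k$, $s\mapsto\lambda(s,k)$ is continuous, nondecreasing, $\lambda(0,k)=0$; for each $s$, $k\mapsto\lambda(s,k)$ is nonincreasing, $\lambda(s,0)\le s$; (2) $\sum_{k}\lambda(r,k)^p<\infty$; (3) for every $x$ with $\mathrm{dist}(x,\mathcal{A})\le r$ there is $\pi\in U^{\mathbb{Z}_+}$ with $\mathrm{dist}(\varphi_x^\pi(k),\mathcal{A})\le M\lambda(\mathrm{dist}(x,\mathcal{A}),k)$ for all $k$. Let $\mathcal{D}_{\mathcal{A}}:=\{x:\exists\pi\in U^{\mathbb{Z}_+},\ \lim_{k\to\infty}\mathrm{dist}(\varphi_x^\pi(k),\mathcal{A})=0\}$. Let $\alpha:\mathbb{R}^n\to\mathbb{R}_+$ be continuous with $\underline{\alpha}\,\mathrm{dist}(x,\mathcal{A})^{\bar p}\le\alpha(x)\le\overline{\alpha}\,\mathrm{dist}(x,\mathcal{A})^{\bar p}$, constants $\underline{\alpha},\overline{\alpha}>0$, $\bar p\ge p$. Define $\Psi(X):=\inf_{y\in X}\alpha(y)$, $\mathcal{V}(X):=\sum_{k=0}^\infty\Psi(\mathcal{R}(X,k))\in[0,\infty]$, and $\mathcal{W}(X):=1-\exp(-\mathcal{V}(X))$ with the convention $\exp(-\infty)=0$. *)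

(* Defs.v *)
From HB Require Import structures.
From mathcomp Require Import all_boot all_order all_algebra.
From mathcomp Require Import all_classical all_reals all_analysis.
Set Implicit Arguments. Unset Strict Implicit. Unset Printing Implicit Defensive.
Import Order.TTheory GRing.Theory Num.Theory.
Import numFieldNormedType.Exports.
Local Open Scope classical_set_scope.
Local Open Scope ring_scope.

Section Defs.
Variables (R : realType) (n m : nat).
Notation X := 'rV[R]_n.
Notation Uv := 'rV[R]_m.

Definition is_norm (nrm : X -> R) : Prop :=
  [/\ forall x, 0 <= nrm x,
      forall x, nrm x = 0 -> x = 0,
      forall (a : R) x, nrm (a *: x) = `|a| * nrm x
    & forall x y, nrm (x + y) <= nrm x + nrm y].

Definition dist (nrm : X -> R) (x : X) (Om : set X) : R :=
  inf [set nrm (x - y) | y in Om].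

Fixpoint traj (f : X -> Uv -> X) (x : X) (pi : nat -> Uv) (k : nat) : X :=
  match k with
  | 0 => x
  | k'.+1 => f (traj f x pi k') (pi k')
  end.

Definition admissible (U : set Uv) (pi : nat -> Uv) : Prop := forall k, U (pi k).

Definition reach (f : X -> Uv -> X) (U : set Uv) (A : set X) (k : nat) : set X :=
  [set z | exists x pi, [/\ A x, admissible U pi & z = traj f x pi k]].

Definition controlled_invariant (f : X -> Uv -> X) (U : set Uv) (A : set X) :=
  forall x, A x -> exists2 u, U u & A (f x u).

Definition lp_stabilizable (nrm : X -> R) (f : X -> Uv -> X) (U : set Uv)
    (A : set X) (p : R) : Prop :=
  exists (r M : R) (lam : R -> nat -> R),
  (0 < r) /\ (1 <= M) /\
  (forall s k, 0 <= s <= r -> 0 <= lam s k) /\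
  (forall k, {within `[0, r], continuous (fun s => lam s k)}) /\
  (forall k, {in `[0, r] &, {homo (fun s => lam s k) : s t / s <= t}}) /\
  (forall k, lam 0 k = 0) /\
  (forall s, 0 <= s <= r -> {homo lam s : k l / (k <= l)%N >-> l <= k}) /\
  (forall s, 0 <= s <= r -> lam s 0 <= s) /\
  (\sum_(0 <= k <oo) ((lam r k `^ p)%:E) < +oo)%E /\
  (forall x, dist nrm x A <= r ->
     exists2 pi, admissible U pi &
       forall k, dist nrm (traj f x pi k) A <= M * lam (dist nrm x A) k).

Definition domain_attr (nrm : X -> R) (f : X -> Uv -> X) (U : set Uv)
    (A : set X) : set X :=
  [set x | exists2 pi, admissible U pi &
     (fun k => dist nrm (traj f x pi k) A) @ \oo --> (0 : R)].

Definition Psi (alpha : X -> R) (S : set X) : R := inf [set alpha y | y in S].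

Definition Vf (alpha : X -> R) (f : X -> Uv -> X) (U : set Uv) (S : set X)
  : \bar R := (\sum_(0 <= k <oo) (Psi alpha (reach f U S k))%:E)%E.

(* W(S) = 1 - exp(-V(S)), with exp(-oo) = 0 *)
Definition Wf (alpha : X -> R) (f : X -> Uv -> X) (U : set Uv) (S : set X) : R :=
  match Vf alpha f U S with
  | EFin v => 1 - expR (- v)
  | _ => 1
  end.

End Defs.

(* Main.v *)
Require Import Defs.
From mathcomp Require Import lra.
From HB Require Import structures.
From mathcomp Require Import all_boot all_order all_algebra.
From mathcomp Require Import all_classical all_reals all_analysis.
Import Order.TTheory GRing.Theory Num.Theory.
Import numFieldNormedType.Exports.
Local Open Scope classical_set_scope.
Local Open Scope ring_scope.
Set Implicit Arguments. Unset Strict Implicit. Unset Printing Implicit Defensive.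

Section Aux.
Variables (R : realType) (n m : nat).
Notation X := 'rV[R]_n.
Notation Uv := 'rV[R]_m.
Variables (f : X -> Uv -> X) (U : set Uv).

Lemma traj_ext x pi pi' k : (forall j, (j < k)%N -> pi j = pi' j) ->
  traj f x pi k = traj f x pi' k.
Proof.
elim: k => [//|k IH] H /=.
rewrite IH ?H // => j jk; apply: H; exact: (ltn_trans jk (ltnSn k)).
Qed.

Lemma traj_shift x pi k :
  traj f x pi k.+1 = traj f (f x (pi 0%N)) (fun j => pi j.+1) k.
Proof. by elim: k => //= k ->. Qed.

Lemma reach_succ_inv x k z : reach f U [set x] k.+1 z ->
  exists2 u, U u & reach f U [set f x u] k z.
Proof.
case=> x0 [pi [/= -> adm ->]].
exists (pi 0%N); first exact: adm.
exists (f x (pi 0%N)), (fun j => pi j.+1); split => //; last exact: traj_shift.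
Qed.

Lemma reach_succ x u k z : U u -> reach f U [set f x u] k z ->
  reach f U [set x] k.+1 z.
Proof.
move=> Uu [x0 [pi [/= -> adm ->]]].
exists x, (fun j => if j is j'.+1 then pi j' else u); split => //.
  by case.
by rewrite traj_shift.
Qed.

Lemma reach_step S k w u : reach f U S k w -> U u -> reach f U S k.+1 (f w u).
Proof.
move=> [x0 [pi [Sx adm ->]]] Uu.
exists x0, (fun j => if j == k then u else pi j); split => //.
  by move=> j; case: ifP.
rewrite /= eqxx; congr f; apply: traj_ext => j jk.
by rewrite (ltn_eqF jk).
Qed.

Lemma reach_inv S k z : reach f U S k.+1 z ->
  exists w u, [/\ reach f U S k w, U u & z = f w u].
Proof.
move=> [x0 [pi [Sx adm ->]]].
exists (traj f x0 pi k), (pi k); split => //; exists x0, pi; split => //.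
Qed.

Lemma reach_ne y u0 k : U u0 -> reach f U [set y] k (traj f y (fun _ => u0) k).
Proof. by move=> Uu; exists y, (fun _ => u0); split. Qed.

Lemma reach0 y z : reach f U [set y] 0 z -> z = y.
Proof. by case=> x0 [pi [/= -> _ ->]]. Qed.

End Aux.

Lemma inf_eq_char (R : realType) (E1 E2 : set R) :
  E1 !=set0 -> E2 !=set0 -> lbound E1 0 -> lbound E2 0 ->
  (forall a, E1 a -> exists2 b, E2 b & b <= a) ->
  (forall a, E2 a -> exists2 b, E1 b & b <= a) ->
  inf E1 = inf E2.
Proof.
move=> n1 n2 l1 l2 h12 h21; apply/le_anti/andP; split.
  apply: lb_le_inf => // a /h21 [b Eb ba].
  by apply: le_trans ba; apply: ge_inf => //; exists 0.
apply: lb_le_inf => // a /h12 [b Eb ba].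
by apply: le_trans ba; apply: ge_inf => //; exists 0.
Qed.

Lemma inf_min (R : realType) (E : set R) a :
  E a -> lbound E a -> inf E = a.
Proof.
move=> Ea la; apply/le_anti/andP; split.
  by apply: ge_inf => //; exists a.
by apply: lb_le_inf => //; exists a.
Qed.

Lemma key_reach (R : realType) n m (f : 'rV[R]_n -> 'rV[R]_m -> 'rV[R]_n)
  (U : set 'rV[R]_m) (rho : 'rV[R]_n -> R) u0 :
  U u0 ->
  (forall w0 z0 u, rho w0 <= rho z0 -> U u ->
     exists2 u', U u' & rho (f w0 u') <= rho (f z0 u)) ->
  forall k y y' z, rho y' <= rho y -> reach f U [set y] k z ->
  exists2 w, reach f U [set y'] k w & rho w <= rho z.
Proof.
move=> Uu0 SL; elim=> [|k IH] y y' z yy' hz.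
  rewrite (reach0 hz); exists y' => //.
  by exists y', (fun _ => u0); split.
have [w0 [u [hw0 Uu ->]]] := reach_inv hz.
have [w1 hw1 le1] := IH _ _ _ yy' hw0.
have [u' Uu' le2] := SL _ _ _ le1 Uu.
by exists (f w1 u'); [exact: reach_step|].
Qed.

Section NormCont.
Variables (R : realType) (n : nat) (nrm : 'rV[R]_n -> R).
Hypothesis hn : is_norm nrm.

Lemma nrm0 : nrm 0 = 0.
Proof.
case: hn => _ _ hs _.
by rewrite -(scale0r (0 : 'rV[R]_n)) hs normr0 mul0r.
Qed.

Lemma nrmN v : nrm (- v) = nrm v.
Proof. case: hn => _ _ hs _. by rewrite -scaleN1r hs normrN1 mul1r. Qed.

Lemma nrm_sum (I : Type) (s : seq I) (F : I -> 'rV[R]_n) :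
  nrm (\sum_(j <- s) F j) <= \sum_(j <- s) nrm (F j).
Proof.
case: hn => _ _ _ ht.
elim: s => [|a s IH]; first by rewrite !big_nil nrm0.
rewrite !big_cons; apply: le_trans (ht _ _) _; exact: lerD.
Qed.

Lemma nrm_bound : exists2 C, 0 <= C & forall v, nrm v <= C * `|v|.
Proof.
case: hn => h0 _ hs _.
exists (\sum_(j < n) nrm 'e_j).
  by apply: sumr_ge0 => j _; exact: h0.
move=> v; rewrite {1}(row_sum_delta v).
apply: le_trans (nrm_sum _ _) _.
rewrite mulr_suml; apply: ler_sum => j _.
rewrite hs mulrC ler_wpM2l //.
rewrite [X in _ <= X]mx_normrE.
exact: (le_bigmax _ (fun ij : 'I_1 * 'I_n => `|v ij.1 ij.2|) (0, j)).
Qed.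

Lemma nrm_lip a b : `|nrm a - nrm b| <= nrm (a - b).
Proof.
case: hn => _ _ _ ht.
have h1 := ht (b - a) a; have h2 := ht (a - b) b.
rewrite !subrK -[b - a]opprB nrmN in h1 h2.
rewrite ler_norml; apply/andP; split; lra.
Qed.

Lemma nrm_dist_cont (x : 'rV[R]_n) : continuous (fun y : 'rV[R]_n => nrm (x - y)).
Proof.
have [C C0 hC] := nrm_bound.
move=> y; apply/(@cvgrPdist_le _ _ _ (nbhs y) (nbhs_filter y)) => e e0.
have d0 : 0 < e / (C + 1) by rewrite divr_gt0 // ltr_wpDl.
near=> t.
apply: le_trans (nrm_lip _ _) _.
rewrite opprB addrC addrA subrK.
apply: le_trans (hC _) _; rewrite distrC.
have ht : `|y - t| <= e / (C + 1).
  near: t.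
  exact: (@cvgr_dist_le _ _ _ (nbhs y) (nbhs_filter y) id y (@cvg_id _ (nbhs y)) _ d0).
apply: le_trans (ler_wpM2l C0 ht) _.
rewrite mulrA ler_pdivrMr ?ltr_wpDl // [C * e]mulrC ler_wpM2l ?(ltW e0) // lerDl.
Unshelve. all: by end_near.
Qed.

End NormCont.

Unset Implicit Arguments. Set Strict Implicit.

Theorem theorem15 (R : realType) (n m : nat)
  (nrm : 'rV[R]_n -> R) (f : 'rV[R]_n -> 'rV[R]_m -> 'rV[R]_n)
  (U : set 'rV[R]_m) (A : set 'rV[R]_n)
  (alpha : 'rV[R]_n -> R) (alo ahi pbar : R)
  (rho : 'rV[R]_n -> R) (phi Gamma : R -> R) :
  is_norm nrm ->
  continuous (fun xu : 'rV[R]_n * 'rV[R]_m => f xu.1 xu.2) ->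
  compact U -> U !=set0 ->
  compact A -> A !=set0 ->
  controlled_invariant f U A ->
  (exists p : R, [/\ 0 < p, p <= pbar & lp_stabilizable nrm f U A p]) ->
  continuous alpha -> (forall x, 0 <= alpha x) ->
  0 < alo -> 0 < ahi ->
  (forall x, alo * dist nrm x A `^ pbar <= alpha x) ->
  (forall x, alpha x <= ahi * dist nrm x A `^ pbar) ->
  continuous rho -> (forall x, 0 <= rho x) ->
  {within `[0, +oo[, continuous phi} ->
  (forall s, 0 <= s -> 0 <= phi s) ->
  {in `[0, +oo[ &, {homo phi : s t / s <= t}} ->
  (forall x, alpha x = phi (rho x)) ->
  (forall s, 0 <= s -> 0 <= Gamma s) ->
  {in `[0, +oo[ &, {homo Gamma : s t / s <= t}} ->
  (forall x, inf [set rho (f x u) | u in U] = Gamma (rho x)) ->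
  forall x, domain_attr nrm f U A x -> ~ A x ->
    (ereal_inf [set Vf alpha f U [set f x u] | u in U] < Vf alpha f U [set x])%E /\
    inf [set Wf alpha f U [set f x u] | u in U] < Wf alpha f U [set x].
Proof.
move=> hnrm hf cU U0 cA A0 _ [p [p0 ppbar [r [M [lam [r0 [M1 [lam0 [_
  [lamhomo [_ [lamk [lam0r [lamsum hstab]]]]]]]]]]]]]]
  _ halp0 alo0 ahi0 hlo hhi hrhoc hrho0 _ hphi0 hphimono halphaE hG0 hGmono
  hinf x [pi adm hcvg] xA.
have [u0 Uu0] := U0.
have nn0 : forall s : R, 0 <= s -> s \in `[0, +oo[ by move=> s s0; rewrite in_itv /= s0.
have hmin : forall w, exists2 u, U u & forall u', U u' -> rho (f w u) <= rho (f w u').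
  move=> w.
  have cw : {within U, continuous (fun u => rho (f w u))}.
    apply: continuous_subspaceT => u.
    apply: (@continuous_comp _ _ _ (fun u => (w, u)) (fun xu => rho (f xu.1 xu.2))).
      have H1 : (fun=> w) @ nbhs u --> nbhs w by exact: cvg_cst.
      have H2 : id @ nbhs u --> nbhs u by exact: cvg_id.
      exact: (cvg_pair H1 H2).
    apply: (@continuous_comp _ _ _ (fun xu : 'rV[R]_n * 'rV[R]_m => f xu.1 xu.2) rho).
      exact: hf.
    exact: hrhoc.
  have [c cU' hc] := compact_EVT_min U0 cU cw.
  exists c; first by rewrite -in_setE.
  by move=> u' Uu'; apply: hc; rewrite in_setE.
have hGmin : forall w, exists2 u, U u & rho (f w u) = Gamma (rho w).
  move=> w; have [u Uu hu] := hmin w; exists u => //.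
  rewrite -hinf; apply/esym/inf_min; first by exists u.
  by move=> _ [u' Uu' <-]; exact: hu.
have SL : forall w0 z0 u, rho w0 <= rho z0 -> U u ->
     exists2 u', U u' & rho (f w0 u') <= rho (f z0 u).
  move=> w0 z0 u le Uu; have [u' Uu' hu'] := hGmin w0; exists u' => //.
  rewrite hu'; apply: (le_trans (hGmono _ _ (nn0 _ (hrho0 _)) (nn0 _ (hrho0 _)) le)).
  rewrite -hinf; apply: ge_inf; last by exists u.
  by exists 0 => _ [u1 _ <-].
have [us Uus hus] := hmin x.
have reach_ne' : forall y k, reach f U [set y] k !=set0.
  by move=> y k; exists (traj f y (fun _ => u0) k); exact: reach_ne.
have Psi_ge0 : forall y k, 0 <= Psi alpha (reach f U [set y] k).
  move=> y k; apply: lb_le_inf.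
    by have [z hz] := reach_ne' y k; exists (alpha z), z.
  by move=> _ [z _ <-].
have Psi_le : forall y k z, reach f U [set y] k z ->
    Psi alpha (reach f U [set y] k) <= alpha z.
  move=> y k z hz; apply: ge_inf; last by exists z.
  by exists 0 => _ [z' _ <-].
have hshift : forall k, Psi alpha (reach f U [set x] k.+1) =
    Psi alpha (reach f U [set f x us] k).
  move=> k; apply: inf_eq_char.
  - by have [z hz] := reach_ne' x k.+1; exists (alpha z), z.
  - by have [z hz] := reach_ne' (f x us) k; exists (alpha z), z.
  - by move=> _ [z _ <-].
  - by move=> _ [z _ <-].
  - move=> _ [z hz <-].
    have [u1 Uu1 hz1] := reach_succ_inv hz.
    have [w hw lew] := key_reach Uu0 SL (hus _ Uu1) hz1.
    exists (alpha w); first by exists w.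
    rewrite !halphaE; apply: hphimono => //; exact: nn0.
  - move=> _ [w hw <-]; exists (alpha w) => //; exists w => //.
    exact: reach_succ Uus hw.
have Vsplit : Vf alpha f U [set x] = ((alpha x)%:E + Vf alpha f U [set f x us])%E.
  rewrite /Vf (@nneseries_split _ _ 0 1); last by move=> k _; rewrite lee_fin.
  rewrite add0n big_nat1.
  have -> : Psi alpha (reach f U [set x] 0) = alpha x.
    apply: inf_min; first by exists x => //; exists x, (fun _ => u0); split.
    by move=> _ [z hz <-]; rewrite (reach0 hz).
  congr (_ + _)%E.
  rewrite -nneseries_addn; last by move=> k; rewrite lee_fin.
  by apply: eq_eseriesr => k _; rewrite addn1 hshift.
have hnrm0 : forall v, 0 <= nrm v by case: hnrm.
have dist_ge0 : forall y, 0 <= dist nrm y A.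
  move=> y; apply: lb_le_inf.
    by have [a Aa] := A0; exists (nrm (y - a)), a.
  by move=> _ [a _ <-].
have hdist : 0 < dist nrm x A.
  have cd : {within A, continuous (fun y => nrm (x - y))}.
    by apply: continuous_subspaceT; exact: (nrm_dist_cont (x:=x) hnrm).
  have [a0 a0A ha0] := compact_EVT_min A0 cA cd.
  rewrite in_setE in a0A.
  have -> : dist nrm x A = nrm (x - a0).
    apply: inf_min; first by exists a0.
    by move=> _ [a Aa <-]; apply: ha0; rewrite in_setE.
  rewrite lt_def hnrm0 andbT; apply/eqP => h.
  case: hnrm => _ h0 _ _; move/h0: h => /eqP; rewrite subr_eq0 => /eqP xa.
  by apply: xA; rewrite xa.
have alpha_pos : 0 < alpha x.
  by apply: lt_le_trans (hlo x); exact: mulr_gt0 alo0 (powR_gt0 _ hdist).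
have pb0 : 0 <= pbar by apply: le_trans ppbar; exact: ltW.
have Vfin : (Vf alpha f U [set x] < +oo)%E.
  have [K HK] : exists K, dist nrm (traj f x pi K) A <= r.
    have := cvgr_dist_le _ _ hcvg _ r0.
    move=> [N _ HN]; exists N; have := HN N (leqnn N).
    by rewrite sub0r normrN => h; exact: le_trans (ler_norm _) h.
  set z := traj f x pi K.
  have [pi' adm' hb] := hstab z HK.
  set d := dist nrm z A.
  have d0 : 0 <= d := dist_ge0 z.
  set c := ahi * M `^ pbar * r `^ (pbar - p).
  have hrr : 0 <= r <= r by rewrite (ltW r0) lexx.
  have lamr0 : forall k, 0 <= lam r k by move=> k; exact: lam0.
  have lamrr : forall k, lam r k <= r.
    by move=> k; apply: le_trans (lam0r r hrr); exact: (lamk r hrr 0%N k (leq0n k)).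
  have hbound : forall k, Psi alpha (reach f U [set x] (K + k)) <= c * lam r k `^ p.
    move=> k.
    pose pi2 := fun j => if (j < K)%N then pi j else pi' (j - K)%N.
    have htr : traj f x pi2 (K + k) = traj f z pi' k.
      elim: k => [|k IH].
        by rewrite addn0; apply: traj_ext => j jK; rewrite /pi2 jK.
      by rewrite addnS /= IH /pi2 ltnNge leq_addr /= addKn.
    have hr2 : reach f U [set x] (K + k) (traj f z pi' k).
      rewrite -htr; exists x, pi2; split => // j; rewrite /pi2.
      by case: ifP => _; [exact: adm | exact: adm'].
    apply: le_trans (Psi_le _ _ _ hr2) _.
    apply: le_trans (hhi _) _.
    rewrite /c -!mulrA; apply: ler_wpM2l; first exact: ltW.
    have hdk : dist nrm (traj f z pi' k) A <= M * lam r k.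
      apply: le_trans (hb k) _; apply: ler_wpM2l; first by apply: le_trans M1.
      by apply: lamhomo; rewrite ?in_itv /= ?d0 ?HK ?(ltW r0) ?lexx.
    have M0 : 0 <= M by apply: le_trans M1.
    apply: le_trans (ge0_ler_powR pb0 _ _ hdk) _; rewrite ?nnegrE ?dist_ge0 ?mulr_ge0 //.
    rewrite powRM //; apply: ler_wpM2l; first exact: powR_ge0.
    case: (eqVneq (lam r k) 0) => [->|lne].
      by rewrite powR0 ?gt_eqF ?(lt_le_trans p0 ppbar) // mulr_ge0 // powR_ge0.
    have -> : lam r k `^ pbar = lam r k `^ (pbar - p) * lam r k `^ p.
      by rewrite -powRD ?lne ?implybT // subrK.
    apply: ler_wpM2r; first exact: powR_ge0.
    by apply: ge0_ler_powR; rewrite ?nnegrE ?subr_ge0 ?(ltW r0).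
  rewrite /Vf (@nneseries_split _ _ 0 K); last by move=> k _; rewrite lee_fin.
  rewrite sumEFin add0n -nneseries_addn; last by move=> k; rewrite lee_fin.
  apply: lte_add_pinfty; first exact: ltry.
  apply: (@le_lt_trans _ _ (\sum_(0 <= k <oo) (c * lam r k `^ p)%:E)%E).
    apply: lee_nneseries => k.
      by move=> _ _; rewrite lee_fin.
    by move=> _; rewrite lee_fin addnC; exact: hbound.
  under eq_eseriesr do rewrite EFinM.
  rewrite nneseriesZl; last by move=> k _; rewrite lee_fin powR_ge0.
  have S0 : (0 <= \sum_(0 <= k <oo) (lam r k `^ p)%:E)%E.
    by apply: nneseries_ge0 => k _ _; rewrite lee_fin powR_ge0.
  have : (\sum_(0 <= k <oo) (lam r k `^ p)%:E)%E \is a fin_num.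
    by rewrite ge0_fin_numE.
  by move/fineK <-; rewrite -EFinM; exact: ltry.
have V0 : forall S, (0 <= Vf alpha f U S)%E.
  move=> S; apply: nneseries_ge0 => k _ _; rewrite lee_fin.
  case: (pselect (reach f U S k !=set0)) => [[z hz]|hne].
    by apply: lb_le_inf; [exists (alpha z), z | move=> _ [z' _ <-]].
  have -> : reach f U S k = set0.
    by apply/seteqP; split => // z hz; exfalso; apply: hne; exists z.
  by rewrite /Psi image_set0 inf0.
have W0 : forall S, 0 <= Wf alpha f U S.
  move=> S; rewrite /Wf; have := V0 S.
  case: (Vf alpha f U S) => [v| |] // v0.
  by rewrite subr_ge0 expR_le1 oppr_le0 -lee_fin.
case E: (Vf alpha f U [set f x us]) => [w| |]; last first.
- by have := V0 [set f x us]; rewrite E.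
- by move: Vfin; rewrite Vsplit E.
have Vx : Vf alpha f U [set x] = (alpha x + w)%:E by rewrite Vsplit E.
split.
  apply: (@le_lt_trans _ _ w%:E).
    by rewrite -E; apply: ereal_inf_lbound; exists us.
  by rewrite Vx lte_fin ltrDr.
apply: (@le_lt_trans _ _ (1 - expR (- w))).
  apply: ge_inf.
    by exists 0 => _ [u Uu <-]; exact: W0.
  by exists us => //; rewrite /Wf E.
by rewrite /Wf Vx ltrD2l ltrN2 ltr_expR ltrN2 ltrDr.
Qed.
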